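(* Let $\mathbb{D}=\{z\in\mathbb{C}:|z|<1\}$. For all $z_1,z_2\in\mathbb{D}$, \[ s_{\mathbb{D}}(z_1,z_2)\le \frac{|z_1-z_2|}{2-|z_1+z_2|}, \] and equality holds if and only if the points $z_1,0,z_2$ are collinear.
   Context: The triangular ratio metric of $\mathbb{D}$ is $s_{\mathbb{D}}(z_1,z_2)=\sup_{z\in\partial\mathbb{D}}\frac{|z_1-z_2|}{|z_1-z|+|z-z_2|}$. *)

(* Defs.v *)
From Stdlib Require Import Reals.
From Coquelicot Require Import Coquelicot.
Open Scope R_scope.

Definition in_unit_disk (z : C) : Prop := Cmod z < 1.

Definition s_D (z1 z2 : C) : Rbar :=
  Lub_Rbar (fun t : R => exists z : C, Cmod z = 1 /\
              t = Cmod (z1 - z2) / (Cmod (z1 - z) + Cmod (z - z2))).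

(* z1, 0, z2 are collinear (lie on a common real line) iff
   Im(z1 * conj z2) = 0, i.e. det(z1, z2) = 0. *)
Definition collinear3 (a b c : C) : Prop :=
  snd ((b - a) * Cconj (c - a))%C = 0.

(* Main.v *)
Require Import Defs.
From Stdlib Require Import Reals Lra Psatz.
From Coquelicot Require Import Coquelicot.
Open Scope R_scope.

Lemma tri (a b c d : R) :
  sqrt ((a+c)^2+(b+d)^2) <= sqrt (a^2+b^2) + sqrt (c^2+d^2).
Proof. exact (Cmod_triangle (a,b) (c,d)). Qed.

Lemma sq_sqrt' (x : R) : 0 <= x -> sqrt x * sqrt x = x.
Proof. apply sqrt_sqrt. Qed.

Lemma tri_eq (a b c d : R) :
  sqrt (a^2+b^2) + sqrt (c^2+d^2) = sqrt ((a+c)^2+(b+d)^2) -> a*d - b*c = 0.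
Proof.
  intro H.
  pose proof (sqrt_pos (a^2+b^2)) as Hu.
  pose proof (sqrt_pos (c^2+d^2)) as Hv.
  pose proof (sq_sqrt' (a^2+b^2) ltac:(apply Rplus_le_le_0_compat; apply pow2_ge_0)) as Hu2.
  pose proof (sq_sqrt' (c^2+d^2) ltac:(apply Rplus_le_le_0_compat; apply pow2_ge_0)) as Hv2.
  pose proof (sq_sqrt' ((a+c)^2+(b+d)^2) ltac:(apply Rplus_le_le_0_compat; apply pow2_ge_0)) as Hw2.
  set (u := sqrt (a^2+b^2)) in *. set (v := sqrt (c^2+d^2)) in *.
  set (w := sqrt ((a+c)^2+(b+d)^2)) in *.
  assert (E : u * v = a*c + b*d).
  { assert (X : u*u + 2*(u*v) + v*v = w*w) by (rewrite <- H; ring).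
    rewrite Hu2, Hv2, Hw2 in X. nra. }
  assert (E2 : (u*v)*(u*v) = (a^2+b^2)*(c^2+d^2)).
  { replace ((u*v)*(u*v)) with ((u*u)*(v*v)) by ring. rewrite Hu2, Hv2. ring. }
  assert ((a*d-b*c)*(a*d-b*c) = 0).
  { rewrite E in E2. nra. }
  nra.
Qed.

Lemma cmod_lt1 (a b : R) : sqrt (a^2+b^2) < 1 -> a^2+b^2 < 1.
Proof.
  intro H. destruct (Rlt_or_le (a^2+b^2) 1) as [h|h]; auto.
  apply sqrt_le_1_alt in h. rewrite sqrt_1 in h. lra.
Qed.

Lemma cmod_eq1 (a b : R) : sqrt (a^2+b^2) = 1 -> a^2+b^2 = 1.
Proof.
  intro H. rewrite <- (sq_sqrt' (a^2+b^2)) by nra. rewrite H. ring.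
Qed.

Lemma cmod_is1 (a b : R) : a^2+b^2 = 1 -> sqrt (a^2+b^2) = 1.
Proof. intro H; rewrite H; apply sqrt_1. Qed.

Lemma sqrt_ext (x y : R) : x = y -> sqrt x = sqrt y.
Proof. intros ->; reflexivity. Qed.

Lemma two_is (p q : R) : p^2+q^2 = 1 -> sqrt ((2*p)^2+(2*q)^2) = 2.
Proof.
  intro H. replace ((2*p)^2+(2*q)^2) with (2*2) by nra. apply sqrt_square; lra.
Qed.

Section S.
Variables x1 y1 x2 y2 p q : R.
Let A := sqrt ((x1-p)^2+(y1-q)^2).
Let Bv := sqrt ((p-x2)^2+(q-y2)^2).
Let S := sqrt ((x1+x2)^2+(y1+y2)^2).
Let T := sqrt ((2*p-x1-x2)^2+(2*q-y1-y2)^2).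

Lemma stepT : T <= A + Bv.
Proof.
  pose proof (tri (p-x1) (q-y1) (p-x2) (q-y2)) as H.
  unfold T, A, Bv.
  replace ((2*p-x1-x2)^2+(2*q-y1-y2)^2) with ((p-x1+(p-x2))^2+(q-y1+(q-y2))^2) by ring.
  replace ((x1-p)^2+(y1-q)^2) with ((p-x1)^2+(q-y1)^2) by ring.
  replace ((p-x2)^2+(q-y2)^2) with ((p-x2)^2+(q-y2)^2) by ring.
  exact H.
Qed.

Lemma stepS : p^2+q^2 = 1 -> 2 <= T + S.
Proof.
  intro h. pose proof (tri (2*p-x1-x2) (2*q-y1-y2) (x1+x2) (y1+y2)) as H.
  rewrite <- (two_is p q h). unfold T, S.
  replace ((2*p)^2+(2*q)^2) with ((2*p-x1-x2+(x1+x2))^2+(2*q-y1-y2+(y1+y2))^2) by ring.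
  exact H.
Qed.

Lemma K1r : p^2+q^2 = 1 -> 2 - S <= A + Bv.
Proof. intro h. pose proof stepT. pose proof (stepS h). lra. Qed.

Lemma K2r : p^2+q^2 = 1 -> x1^2+y1^2 < 1 -> x2^2+y2^2 < 1 ->
  A + Bv = 2 - S -> x1*y2 - y1*x2 = 0.
Proof.
  intros h h1 h2 E.
  pose proof stepT. pose proof (stepS h).
  assert (E1 : A + Bv = T) by lra.
  assert (E2 : T + S = sqrt ((2*p)^2+(2*q)^2)) by (rewrite (two_is p q h); lra).
  assert (C1 : (p-x1)*(q-y2) - (q-y1)*(p-x2) = 0).
  { apply (tri_eq (p-x1) (q-y1) (p-x2) (q-y2)).
    unfold A, Bv, T in E1.
    replace ((p-x1)^2+(q-y1)^2) with ((x1-p)^2+(y1-q)^2) by ring.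
    rewrite E1. apply sqrt_ext. ring. }
  assert (C2 : (2*p-x1-x2)*(y1+y2) - (2*q-y1-y2)*(x1+x2) = 0).
  { apply tri_eq. unfold T, S in E2. rewrite E2. apply sqrt_ext. ring. }
  set (c1 := p*y1 - q*x1). set (c2 := p*y2 - q*x2).
  set (d1 := p*x1 + q*y1). set (d2 := p*x2 + q*y2).
  set (k := x1*y2 - y1*x2).
  assert (Hc : c1 + c2 = 0) by (unfold c1, c2; nra).
  assert (Hk1 : k = c2 - c1) by (unfold k, c1, c2; nra).
  assert (Hk2 : k * (p^2+q^2) = d1*c2 - c1*d2) by (unfold k, c1, c2, d1, d2; ring).
  rewrite h in Hk2.
  assert (Hd : d1 + d2 < 2).
  { assert ((d1+d2)^2 <= (p^2+q^2)*((x1+x2)^2+(y1+y2)^2)).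
    { assert (I : (p^2+q^2)*((x1+x2)^2+(y1+y2)^2) - (d1+d2)^2 = (p*(y1+y2)-q*(x1+x2))^2)
        by (unfold d1, d2; ring).
      pose proof (pow2_ge_0 (p*(y1+y2)-q*(x1+x2))). lra. }
    rewrite h in H1.
    assert ((x1+x2)^2+(y1+y2)^2 < 4) by (pose proof (pow2_ge_0 (x1-x2)); pose proof (pow2_ge_0 (y1-y2)); nra).
    nra. }
  assert (c1 * (2 - d1 - d2) = 0) by nra.
  assert (c1 = 0) by nra.
  nra.
Qed.
End S.

Lemma dlt1 (p q x y : R) : p^2+q^2 = 1 -> x^2+y^2 < 1 -> p*x+q*y < 1.
Proof.
  intros h h1.
  assert (I : (p^2+q^2)*(x^2+y^2) - (p*x+q*y)^2 = (p*y-q*x)^2) by ring.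
  pose proof (pow2_ge_0 (p*y-q*x)). rewrite h in I. nra.
Qed.

Lemma dist1 (p q x y : R) : p^2+q^2 = 1 -> p*y - q*x = 0 -> x^2+y^2 < 1 ->
  sqrt ((x-p)^2+(y-q)^2) = 1 - (p*x+q*y).
Proof.
  intros h hc h1. pose proof (dlt1 p q x y h h1).
  set (d := p*x+q*y) in *.
  assert (ex : x = d*p).
  { assert (I : x*(p^2+q^2) = d*p - q*(p*y-q*x)) by (unfold d; ring).
    rewrite h, hc in I. lra. }
  assert (ey : y = d*q).
  { assert (I : y*(p^2+q^2) = d*q + p*(p*y-q*x)) by (unfold d; ring).
    rewrite h, hc in I. lra. }
  rewrite <- (sqrt_square (1-d)) by lra. apply sqrt_ext.
  rewrite ex, ey. replace ((d*p-p)^2+(d*q-q)^2) with ((1-d)*(1-d)*(p^2+q^2)) by ring.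
  rewrite h; ring.
Qed.

Lemma Wit (x1 y1 x2 y2 p q : R) : p^2+q^2 = 1 -> x1^2+y1^2 < 1 -> x2^2+y2^2 < 1 ->
  p*y1 - q*x1 = 0 -> p*y2 - q*x2 = 0 ->
  (p*x1+q*y1) + (p*x2+q*y2) = sqrt ((x1+x2)^2+(y1+y2)^2) ->
  sqrt ((x1-p)^2+(y1-q)^2) + sqrt ((p-x2)^2+(q-y2)^2) = 2 - sqrt ((x1+x2)^2+(y1+y2)^2).
Proof.
  intros h h1 h2 c1 c2 E.
  rewrite (dist1 p q x1 y1 h c1 h1).
  replace ((p-x2)^2+(q-y2)^2) with ((x2-p)^2+(y2-q)^2) by ring.
  rewrite (dist1 p q x2 y2 h c2 h2). lra.
Qed.

Lemma K3r (x1 y1 x2 y2 : R) : x1^2+y1^2 < 1 -> x2^2+y2^2 < 1 -> x1*y2 - y1*x2 = 0 ->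
  exists p q, p^2+q^2 = 1 /\
  sqrt ((x1-p)^2+(y1-q)^2) + sqrt ((p-x2)^2+(q-y2)^2) = 2 - sqrt ((x1+x2)^2+(y1+y2)^2).
Proof.
  intros h1 h2 hk.
  set (X := x1+x2). set (Y := y1+y2).
  assert (HS2 : sqrt (X^2+Y^2) * sqrt (X^2+Y^2) = X^2+Y^2)
    by (apply sq_sqrt'; apply Rplus_le_le_0_compat; apply pow2_ge_0).
  pose proof (sqrt_pos (X^2+Y^2)) as HS0.
  set (S := sqrt (X^2+Y^2)) in *.
  destruct (Rle_lt_or_eq_dec 0 S HS0) as [Sp|S0].
  - exists (X/S), (Y/S).
    assert (hp : (X/S)^2+(Y/S)^2 = 1) by (field_simplify; [rewrite <- HS2; field|]; lra).
    assert (hd : (X/S*x1+Y/S*y1) + (X/S*x2+Y/S*y2) = S).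
    { replace ((X/S*x1+Y/S*y1) + (X/S*x2+Y/S*y2)) with ((X^2+Y^2)/S) by (unfold X, Y; field; lra).
      rewrite <- HS2. field. lra. }
    assert (hc : (X/S*y1 - Y/S*x1) + (X/S*y2 - Y/S*x2) = 0) by (unfold X, Y; field; lra).
    assert (Hk2 : (x1*y2 - y1*x2) * ((X/S)^2+(Y/S)^2) =
       (X/S*x1+Y/S*y1)*(X/S*y2 - Y/S*x2) - (X/S*y1 - Y/S*x1)*(X/S*x2+Y/S*y2)) by ring.
    rewrite hk in Hk2.
    assert (hc1 : X/S*y1 - Y/S*x1 = 0).
    { set (c1 := X/S*y1 - Y/S*x1) in *. set (c2 := X/S*y2 - Y/S*x2) in *.
      set (d1 := X/S*x1+Y/S*y1) in *. set (d2 := X/S*x2+Y/S*y2) in *.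
      assert (c2 = - c1) by lra. subst c2.
      assert (c1 * (d1 + d2) = 0) by nra. rewrite hd in H0. nra. }
    split; [exact hp|]. apply Wit; auto. lra.
  - assert (X = 0 /\ Y = 0) as [X0 Y0].
    { rewrite <- S0 in HS2. split; nra. }
    assert (ex2 : x2 = - x1) by (unfold X in X0; lra).
    assert (ey2 : y2 = - y1) by (unfold Y in Y0; lra).
    assert (HR2 : sqrt (x1^2+y1^2) * sqrt (x1^2+y1^2) = x1^2+y1^2)
      by (apply sq_sqrt'; apply Rplus_le_le_0_compat; apply pow2_ge_0).
    pose proof (sqrt_pos (x1^2+y1^2)) as HR0.
    set (r := sqrt (x1^2+y1^2)) in *.
    destruct (Rle_lt_or_eq_dec 0 r HR0) as [Rp|R0].
    + exists (x1/r), (y1/r).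
      assert (hp : (x1/r)^2+(y1/r)^2 = 1) by (field_simplify; [rewrite <- HR2; field|]; lra).
      split; [exact hp|]. apply Wit; auto.
      * field; lra.
      * rewrite ex2, ey2. field; lra.
      * transitivity 0; [| exact S0]. rewrite ex2, ey2. field. lra.
    + assert (x1 = 0 /\ y1 = 0) as [a b] by (rewrite <- R0 in HR2; split; nra).
      exists 1, 0. split; [ring|]. apply Wit; auto.
      all: try (rewrite ?ex2, ?ey2, ?a, ?b; ring).
      transitivity 0; [| exact S0]. rewrite ex2, ey2, a, b. ring.
Qed.

Lemma cplus f g x : continuity_pt f x -> continuity_pt g x -> continuity_pt (fun y => f y + g y) x.
Proof. exact (continuity_pt_plus f g x). Qed.
Lemma cminus f g x : continuity_pt f x -> continuity_pt g x -> continuity_pt (fun y => f y - g y) x.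
Proof. exact (continuity_pt_minus f g x). Qed.
Lemma cmult f g x : continuity_pt f x -> continuity_pt g x -> continuity_pt (fun y => f y * g y) x.
Proof. exact (continuity_pt_mult f g x). Qed.
Lemma cconst c x : continuity_pt (fun _ => c) x.
Proof. apply continuity_pt_const. intros a b; reflexivity. Qed.
Lemma cid x : continuity_pt (fun y => y) x.
Proof. apply continuity_pt_id. Qed.
Lemma csq f x : continuity_pt f x -> continuity_pt (fun y => (f y)^2) x.
Proof.
  intro H. change (continuity_pt (fun y => f y * (f y * 1)) x).
  apply cmult; auto. apply cmult; auto. apply cconst.
Qed.
Lemma csqrt f x : continuity_pt f x -> 0 <= f x -> continuity_pt (fun y => sqrt (f y)) x.
Proof.
  intros H H0. exact (continuity_pt_comp f sqrt x H (continuity_pt_sqrt _ H0)).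
Qed.

Definition gg (x1 y1 x2 y2 p q : R) :=
  sqrt ((x1-p)^2+(y1-q)^2) + sqrt ((p-x2)^2+(q-y2)^2).

Lemma hcont (x1 y1 x2 y2 s c : R) : -1 <= c <= 1 ->
  continuity_pt (fun x => gg x1 y1 x2 y2 x (s * sqrt (1 - x^2))) c.
Proof.
  intro hc. unfold gg.
  assert (Hin : continuity_pt (fun x => s * sqrt (1 - x^2)) c).
  { apply cmult; [apply cconst|]. apply csqrt.
    - apply cminus; [apply cconst|]. apply csq, cid.
    - nra. }
  apply cplus; apply csqrt;
    try (apply Rplus_le_le_0_compat; apply pow2_ge_0);
    apply cplus; apply csq; apply cminus; auto using cconst, cid.
Qed.

Lemma K4r (x1 y1 x2 y2 : R) : exists p q, p^2+q^2 = 1 /\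
  forall p' q', p'^2+q'^2 = 1 -> gg x1 y1 x2 y2 p q <= gg x1 y1 x2 y2 p' q'.
Proof.
  destruct (continuity_ab_min (fun x => gg x1 y1 x2 y2 x (1 * sqrt (1 - x^2))) (-1) 1
     ltac:(lra) (fun c hc => hcont x1 y1 x2 y2 1 c hc)) as [m1 [H1 B1]].
  destruct (continuity_ab_min (fun x => gg x1 y1 x2 y2 x (-1 * sqrt (1 - x^2))) (-1) 1
     ltac:(lra) (fun c hc => hcont x1 y1 x2 y2 (-1) c hc)) as [m2 [H2 B2]].
  simpl in H1, H2.
  assert (circ : forall s m, -1 <= m <= 1 -> s^2 = 1 -> m^2 + (s * sqrt (1 - m^2))^2 = 1).
  { intros s m hm hs. replace ((s * sqrt (1 - m^2))^2) with (s^2 * (sqrt (1-m^2) * sqrt (1-m^2))) by ring.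
    rewrite sq_sqrt' by nra. rewrite hs. ring. }
  assert (rep : forall p' q', p'^2+q'^2 = 1 -> -1 <= p' <= 1 /\
             (q' = 1 * sqrt (1 - p'^2) \/ q' = -1 * sqrt (1 - p'^2))).
  { intros p' q' h. split; [nra|].
    replace (1 - p'^2) with (q'²) by (unfold Rsqr; nra).
    rewrite sqrt_Rsqr_abs. unfold Rabs; destruct (Rcase_abs q'); [right|left]; lra. }
  destruct (Rle_or_lt (gg x1 y1 x2 y2 m1 (1 * sqrt (1 - m1^2))) (gg x1 y1 x2 y2 m2 (-1 * sqrt (1 - m2^2)))) as [L|L].
  - exists m1, (1 * sqrt (1 - m1^2)). split; [apply circ; auto; ring|].
    intros p' q' h. destruct (rep p' q' h) as [hp [-> | ->]].
    + apply H1; auto.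
    + eapply Rle_trans; [apply L|]. apply H2; auto.
  - exists m2, (-1 * sqrt (1 - m2^2)). split; [apply circ; auto; ring|].
    intros p' q' h. destruct (rep p' q' h) as [hp [-> | ->]].
    + eapply Rle_trans; [apply Rlt_le, L|]. apply H1; auto.
    + apply H2; auto.
Qed.

Lemma coll_eq (x1 y1 x2 y2 : R) :
  collinear3 (x1,y1) 0 (x2,y2) <-> x1*y2 - y1*x2 = 0.
Proof.
  unfold collinear3. unfold Cmult, Cconj, Cminus, Cplus, Copp, RtoC; simpl.
  match goal with |- ?a = 0 <-> _ => replace a with (x1*y2-y1*x2) by ring end; tauto.
Qed.

Theorem theorem2p2 (z1 z2 : C) :
  in_unit_disk z1 -> in_unit_disk z2 ->
  Rbar_le (s_D z1 z2) (Finite (Cmod (z1 - z2) / (2 - Cmod (z1 + z2)))) /\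
  (s_D z1 z2 = Finite (Cmod (z1 - z2) / (2 - Cmod (z1 + z2))) <->
   collinear3 z1 0 z2).
Proof.
  destruct z1 as [x1 y1], z2 as [x2 y2]. unfold in_unit_disk.
  intros hz1 hz2.
  pose proof (cmod_lt1 x1 y1 hz1) as h1.
  pose proof (cmod_lt1 x2 y2 hz2) as h2.
  rewrite coll_eq. unfold s_D.
  change (Cmod ((x1,y1) - (x2,y2))) with (sqrt ((x1-x2)^2+(y1-y2)^2)).
  change (Cmod ((x1,y1) + (x2,y2))) with (sqrt ((x1+x2)^2+(y1+y2)^2)).
  set (M := sqrt ((x1-x2)^2+(y1-y2)^2)).
  set (S := sqrt ((x1+x2)^2+(y1+y2)^2)).
  set (E := fun t : R => exists z : C, Cmod z = 1 /\
              t = M / (Cmod ((x1,y1) - z) + Cmod (z - (x2,y2)))).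
  pose proof (Lub_Rbar_correct E) as [Hub Hlub].
  assert (HM : 0 <= M) by apply sqrt_pos.
  assert (HS : S < 2).
  { assert ((x1+x2)^2+(y1+y2)^2 < 4) by (pose proof (pow2_ge_0 (x1-x2)); pose proof (pow2_ge_0 (y1-y2)); nra).
    unfold S. rewrite <- (sqrt_square 2) by lra. apply sqrt_lt_1_alt.
    split; [apply Rplus_le_le_0_compat; apply pow2_ge_0 | lra]. }
  assert (Dval : forall p q, Cmod ((x1,y1) - (p,q)) + Cmod ((p,q) - (x2,y2)) = gg x1 y1 x2 y2 p q)
    by reflexivity.
  assert (ub_of : forall D0, 0 < D0 -> (forall p q, p^2+q^2 = 1 -> D0 <= gg x1 y1 x2 y2 p q) ->
     is_ub_Rbar E (M / D0)).
  { intros D0 hD0 hD t [[p q] [hz ->]]. rewrite Dval. simpl.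
    apply cmod_eq1 in hz. pose proof (hD p q hz).
    unfold Rdiv. apply Rmult_le_compat_l; auto. apply Rinv_le_contravar; lra. }
  assert (Part1 : Rbar_le (Lub_Rbar E) (M / (2 - S))).
  { apply Hlub. apply ub_of; [lra|]. intros p q h. apply K1r; auto. }
  split; [exact Part1|].
  split.
  - intro Heq. destruct (Req_dec (x1*y2 - y1*x2) 0) as [k0|kn]; auto. exfalso.
    destruct (K4r x1 y1 x2 y2) as [p0 [q0 [hc0 hmin]]].
    pose proof (K1r x1 y1 x2 y2 p0 q0 hc0) as G1. fold S in G1.
    assert (G2 : gg x1 y1 x2 y2 p0 q0 <> 2 - S).
    { intro E0. apply kn. eapply K2r; eauto. }
    assert (Mp : 0 < M).
    { destruct (Rle_lt_or_eq_dec 0 M HM) as [l|e]; auto. exfalso. apply kn.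
      assert (e2 : (x1-x2)^2+(y1-y2)^2 = 0).
      { apply sqrt_eq_0; [apply Rplus_le_le_0_compat; apply pow2_ge_0|]. fold M. auto. }
      pose proof (pow2_ge_0 (x1-x2)). pose proof (pow2_ge_0 (y1-y2)).
      assert (ea : (x1-x2)^2 = 0) by lra. assert (eb : (y1-y2)^2 = 0) by lra.
      assert (x1 - x2 = 0) by (destruct (Req_dec (x1-x2) 0) as [ok|ne]; auto; exfalso; exact (pow_nonzero _ 2 ne ea)).
      assert (y1 - y2 = 0) by (destruct (Req_dec (y1-y2) 0) as [ok|ne]; auto; exfalso; exact (pow_nonzero _ 2 ne eb)).
      replace x1 with x2 by lra. replace y1 with y2 by lra. ring. }
    unfold gg in G1, G2.
    set (D0 := gg x1 y1 x2 y2 p0 q0) in *.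
    assert (lt : 2 - S < D0) by (unfold D0, gg; lra).
    assert (U : Rbar_le (Lub_Rbar E) (M / D0)).
    { apply Hlub. apply ub_of; [lra|]. exact hmin. }
    rewrite Heq in U. simpl in U.
    assert (M / D0 < M / (2 - S)).
    { unfold Rdiv. apply Rmult_lt_compat_l; auto. apply Rinv_lt_contravar; nra. }
    lra.
  - intro hk. destruct (K3r x1 y1 x2 y2 h1 h2 hk) as [p [q [hc hD]]].
    assert (InE : E (M / (2 - S))).
    { exists (p,q). split; [apply cmod_is1; auto|]. rewrite Dval. unfold gg. rewrite hD. reflexivity. }
    apply Rbar_le_antisym; [exact Part1|]. apply Hub. exact InE.
Qed.
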